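(* Let $G=HK$ for two normal subgroups $H$ and $K$ of the finite group $G$. Then for all $m\ge1$, $$\beta(m)\,\frac{d(H,K)}{|M(G,H,K)|}\le d^\wedge_m(H,K)\le\gamma(m)\,d(H,K),$$ where $\beta(m)=\min\{\alpha(m,i):i=1,\dots,k_K(H)\}$ and $\gamma(m)=\max\{\alpha(m,i):i=1,\dots,k_K(H)\}$.
   Context: All groups are finite; ${}^g x=gxg^{-1}$, $[x,y]=xyx^{-1}y^{-1}$. For normal subgroups $H,K$ of $G$, $H\wedge K$ is the group generated by symbols $h\wedge k$ ($h\in H,k\in K$) subject to $hh'\wedge k=({}^h h'\wedge {}^h k)(h\wedge k)$, $h\wedge kk'=(h\wedge k)({}^k h\wedge {}^k k')$, $y\wedge y=1$ for $y\in H\cap K$; $\kappa':H\wedge K\to[H,K]$, $h\wedge k\mapsto[h,k]$, is an epimorphism and $M(G,H,K):=\ker\kappa'$. For $m\ge1$, $d^\wedge_m(H,K)=|\{(h,k)\in H\times K:h^m\wedge k=1\}|/(|H||K|)$; $d(H,K)=|\{(h,k)\in H\times K:hk=kh\}|/(|H||K|)=k_K(H)/|H|$, with $k_K(H)$ the number of $K$-conjugacy classes in $H$. With representatives $h_1,\dots,h_{k_K(H)}$ of these classes, $\alpha(m,i)=|C_K(h_i^m)|/|C_K(h_i)|$. *)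

(* Defs.v *)
From HB Require Import structures.
From mathcomp Require Import all_boot all_order all_algebra all_fingroup.
Set Implicit Arguments. Unset Strict Implicit. Unset Printing Implicit Defensive.
Import Order.TTheory GRing.Theory Num.Theory.

(* Paper's conventions: ^g x = g x g^-1, [x,y] = x y x^-1 y^-1. *)
Definition pconj (gT : finGroupType) (g x : gT) : gT := (g * x * g^-1)%g.
Definition pcomm (gT : finGroupType) (x y : gT) : gT := (x * y * x^-1 * y^-1)%g.

(* f : H x K -> L satisfies the defining relations of the nonabelian
   exterior product H /\ K. *)
Definition ext_pairing (gT L : finGroupType) (H K : {set gT})
    (f : gT -> gT -> L) : Prop :=
  [/\ (forall h h' k, h \in H -> h' \in H -> k \in K ->
         f (h * h')%g k = (f (pconj h h') (pconj h k) * f h k)%g),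
      (forall h k k', h \in H -> k \in K -> k' \in K ->
         f h (k * k')%g = (f h k * f (pconj k h) (pconj k k'))%g) &
      (forall y, y \in H :&: K -> f y y = 1%g)].

(* (E, w) is the nonabelian exterior product H /\ K, with w h k = h /\ k:
   w satisfies the relations, its image generates E, and every pairing
   satisfying the relations factors through a homomorphism from E. *)
Definition is_ext_product (gT E : finGroupType) (H K : {set gT})
    (w : gT -> gT -> E) : Prop :=
  [/\ ext_pairing H K w,
      <<[set w h k | h in H, k in K]>>%g = [set: E] &
      forall (L : finGroupType) (f : gT -> gT -> L), ext_pairing H K f ->
        exists phi : E -> L, {morph phi : x y / (x * y)%g} /\
          (forall h k, h \in H -> k \in K -> phi (w h k) = f h k)].

Local Open Scope ring_scope.

Definition dext (gT E : finGroupType) (H K : {set gT}) (w : gT -> gT -> E)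
    (m : nat) : rat :=
  #|[set p : gT * gT | [&& p.1 \in H, p.2 \in K & w (p.1 ^+ m)%g p.2 == 1%g]]|%:R
  / (#|H| * #|K|)%:R.

Definition dcomm (gT : finGroupType) (H K : {set gT}) : rat :=
  #|[set p : gT * gT | [&& p.1 \in H, p.2 \in K & (p.1 * p.2 == p.2 * p.1)%g]]|%:R
  / (#|H| * #|K|)%:R.

Definition alpha (gT : finGroupType) (K : {group gT}) (m : nat) (x : gT) : rat :=
  #|('C_K[x ^+ m])%g|%:R / #|('C_K[x])%g|%:R.

Definition Kclasses (gT : finGroupType) (H K : {set gT}) : {set {set gT}} :=
  [set (x ^: K)%g | x in H].

(* The seed alpha m 1 = 1 is itself
   the value at the class {1}, which is one of the classes. *)
Definition beta (gT : finGroupType) (H K : {group gT}) (m : nat) : rat :=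
  \big[Num.min/alpha K m 1%g]_(C in Kclasses H K) alpha K m (repr C).
Definition gamma (gT : finGroupType) (H K : {group gT}) (m : nat) : rat :=
  \big[Num.max/alpha K m 1%g]_(C in Kclasses H K) alpha K m (repr C).

Definition Mker (gT E : finGroupType) (kappa : E -> gT) : {set E} :=
  [set e | kappa e == 1%g].

(* Main.v *)
Require Import Defs.
From HB Require Import structures.
From mathcomp Require Import all_boot all_order all_algebra all_fingroup.
Import Order.TTheory GRing.Theory Num.Theory.
Set Implicit Arguments. Unset Strict Implicit. Unset Printing Implicit Defensive.
Local Open Scope ring_scope.

Lemma card_pairs (gT : finGroupType) (A B : {set gT}) (R : gT -> gT -> bool) :
  #|[set p : gT * gT | [&& p.1 \in A, p.2 \in B & R p.1 p.2]]| =
  (\sum_(h in A) #|[set k in B | R h k]|)%N.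
Proof.
rewrite (eq_bigr (fun h => \sum_(k | (k \in B) && R h k) 1)%N); last first.
  by move=> h _; rewrite -sum1_card; apply: eq_bigl => k; rewrite inE.
rewrite pair_big_dep /= -sum1_card; apply: eq_bigl => p; rewrite inE.
by [].
Qed.

Lemma cardCJ (gT : finGroupType) (K : {group gT}) (x k : gT) :
  k \in K -> #|('C_K[x ^ k])%g| = #|('C_K[x])%g|.
Proof.
move=> kK; rewrite cent1J -{1}(conjGid kK) -conjIg; exact: cardJg.
Qed.

Lemma alpha_class (gT : finGroupType) (H K : {group gT}) (m : nat) (h : gT) :
  h \in H -> alpha K m (repr (h ^: K)%g) = alpha K m h.
Proof.
move=> hH; have : repr (h ^: K)%g \in (h ^: K)%g by apply: mem_repr (class_refl _ _).
case/imsetP => k kK ->; rewrite /alpha -conjXg !cardCJ //.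
Qed.

Lemma beta_le (gT : finGroupType) (H K : {group gT}) (m : nat) (h : gT) :
  h \in H -> beta H K m <= alpha K m h.
Proof.
move=> hH; rewrite -(@alpha_class _ H K m h hH) /beta.
apply: (@bigmin_le_cond _ _ _ _ (h ^: K)%g); exact: imset_f.
Qed.

Lemma gamma_ge (gT : finGroupType) (H K : {group gT}) (m : nat) (h : gT) :
  h \in H -> alpha K m h <= gamma H K m.
Proof.
move=> hH; rewrite -(@alpha_class _ H K m h hH) /gamma.
apply: (@le_bigmax_cond _ _ _ _ (h ^: K)%g); exact: imset_f.
Qed.
Lemma fiber_bound (gT E : finGroupType) (H K : {group gT}) (w : gT -> gT -> E)
   (kappa : E -> gT) (x : gT) :
  ext_pairing H K w -> {morph kappa : a b / (a * b)%g} ->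
  (forall h k, h \in H -> k \in K -> kappa (w h k) = pcomm h k) -> x \in H ->
  (#|[set k in K | w x k == 1%g]| <= #|('C_K[x])%g|)%N /\
  (#|('C_K[x])%g| <= #|Mker kappa| * #|[set k in K | w x k == 1%g]|)%N.
Proof.
move=> [_ wM _] kM kw xH.
have k1 : kappa 1%g = 1%g.
  by apply: (mulgI (kappa 1%g)); rewrite -kM !mulg1.
set T := [set k in K | w x k == 1%g].
have TC : T \subset ('C_K[x])%g.
  apply/subsetP => k; rewrite inE => /andP[kK /eqP wk].
  rewrite in_setI kK /=; move: (kw x k xH kK); rewrite wk k1 /pcomm => /esym e.
  rewrite cent1E.
  move/eqP: e; rewrite -eq_mulgV1 => /eqP e; apply/eqP; rewrite -{1}e mulgKV //.
split; first exact: subset_leq_card.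
have key : forall k k', k \in ('C_K[x])%g -> k' \in ('C_K[x])%g ->
    w x k' = (w x k * w x (k' * k^-1))%g.
  move=> k k'; rewrite !in_setI => /andP[kK kC] /andP[k'K k'C].
  have -> : w x k' = w x (k * (k^-1 * k'))%g by rewrite mulKVg.
  rewrite wM ?groupM ?groupV //.
  have -> : pconj k x = x.
    by rewrite /pconj; move: kC; rewrite cent1E => /eqP ->; rewrite mulgK.
  by rewrite /pconj mulKVg.
rewrite -sum1_card.
rewrite (partition_big (fun k => w x k) (fun e => e \in Mker kappa)); last first.
  move=> k; rewrite in_setI => /andP[kK kC]; rewrite inE kw // /pcomm.
  by move: kC; rewrite cent1E => /eqP <-; rewrite mulgK mulgV.
rewrite -sum_nat_const leq_sum // => e _.
case: (pickP (fun k => (k \in ('C_K[x])%g) && (w x k == e))) => [k0 /andP[k0C /eqP k0e]|none]; last first.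
  by rewrite big1 // => k; rewrite none.
rewrite sum1_card.
rewrite -(card_rcoset T k0).
apply: subset_leq_card; apply/subsetP => z /andP[zC /eqP ze].
rewrite mem_rcoset inE; apply/andP; split.
  have k0K : k0 \in K by case/setIP: k0C.
  by case/setIP: zC => zK _; rewrite groupMl // groupV.
have := key k0 z k0C zC; rewrite ze -k0e => /esym.
by move=> e2; apply/eqP; apply: (mulgI (w x k0)); rewrite e2 mulg1.
Qed.

Theorem mainTheorem7 (gT : finGroupType) (G H K : {group gT})
    (E : finGroupType) (w : gT -> gT -> E) (kappa : E -> gT) (m : nat) :
  (H <| G)%g -> (K <| G)%g -> (G : {set gT}) = (H * K)%g ->
  is_ext_product H K w ->
  {morph kappa : x y / (x * y)%g} ->
  (forall h k, h \in H -> k \in K -> kappa (w h k) = pcomm h k) ->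
  (1 <= m)%N ->
  beta H K m * dcomm H K / #|Mker kappa|%:R <= dext H K w m
  /\ dext H K w m <= gamma H K m * dcomm H K.
Proof.
move=> _ _ _ [wp _ _] kM kw _.
have k1 : kappa 1%g = 1%g.
  by apply: (mulgI (kappa 1%g)); rewrite -kM !mulg1.
set N := (#|H| * #|K|)%:R : rat.
set c := fun h => #|('C_K[h])%g|.
set cm := fun h => #|('C_K[h ^+ m])%g|.
set t := fun h => #|[set k in K | w (h ^+ m)%g k == 1%g]|.
set Mm := #|Mker kappa|%:R : rat.
have Mpos : 0 < Mm.
  rewrite /Mm ltr0n card_gt0; apply/set0Pn; exists 1%g; by rewrite inE k1.
have Hd : dcomm H K = (\sum_(h in H) (c h)%:R) / N.
  rewrite /dcomm (card_pairs H K (fun h k => (h * k == k * h)%g)) natr_sum; congr (_ / _); apply: eq_bigr => h _.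
  congr (_%:R); apply: eq_card => k; rewrite [RHS]in_setI cent1E inE eq_sym //.
have Hx : dext H K w m = (\sum_(h in H) (t h)%:R) / N.
  by rewrite /dext (card_pairs H K (fun h k => w (h ^+ m)%g k == 1%g)) natr_sum.
have pt : forall h, h \in H -> [/\ (t h <= cm h)%N, (cm h <= #|Mker kappa| * t h)%N
     & alpha K m h * (c h)%:R = (cm h)%:R].
  move=> h hH; have [] := fiber_bound wp kM kw (groupX m hH) => l1 l2.
  split => //; rewrite /alpha mulfVK // pnatr_eq0 -lt0n; exact: cardG_gt0.
split.
  rewrite Hd Hx mulrA mulrAC ler_wpM2r ?invr_ge0 ?ler0n //.
  rewrite ler_pdivrMr // mulr_sumr mulr_suml ler_sum // => h hH.
  have [l1 l2 l3] := pt h hH.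
  apply: (le_trans (y := (cm h)%:R)).
    rewrite -l3 ler_wpM2r ?ler0n //; exact: beta_le.
  by rewrite /Mm -natrM mulnC ler_nat.
rewrite Hd Hx mulrA ler_wpM2r ?invr_ge0 ?ler0n // mulr_sumr ler_sum // => h hH.
have [l1 l2 l3] := pt h hH.
apply: (le_trans (y := (cm h)%:R)); first by rewrite ler_nat.
rewrite -l3 ler_wpM2r ?ler0n //; exact: gamma_ge.
Qed.
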